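(* Let $B>0$, $\mu>0$, and let $A:[0,\infty)\to[0,\infty)$ be such that \[ f(0)\;=\;\frac{B}{\mu}\int_0^\infty e^{-\mu\tau}A(\tau)\,d\tau \] is finite and $f(0)>1$. For $\theta\in(0,1]$ and $p>0$ let $F(\theta,p)$ denote the unique positive solution $x$ of \[ 1=\frac{B}{1+p-\theta}\int_0^\infty\!\!\int_0^\infty\Big(p\theta e^{-\theta a x}+(1+p)(1-\theta)e^{-(1+p)a x}\Big)e^{-\mu(a+\tau)}A(\tau)\,d\tau\,da, \] which equals \[ F(\theta,p)=\frac{\mu}{2}\left\{\Big(f(0)-\frac{1+p+\theta}{\theta(1+p)}\Big)+\sqrt{\Big(\frac{1+p+\theta}{\theta(1+p)}-f(0)\Big)^2+4\,\frac{f(0)-1}{\theta(1+p)}}\right\}. \] Then \[ \lim_{p\to\infty}F(\theta,p)=\begin{cases}0 & \text{if } \theta\le \frac{1}{f(0)},\\[2pt] \mu\big(f(0)-\frac{1}{\theta}\big) & \text{if } \frac{1}{f(0)}<\theta\le 1.\end{cases} \]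
   Context: Age-structured epidemic model with vaccination and constant per-capita mortality rate $\mu$ (survival function $e^{-\mu a}$): $B$ is the constant birth rate, $A(\tau)$ the expected contribution to the force of infection of an individual infected $\tau$ time units ago, $\theta$ the vaccine parameter (vaccinated susceptibles are infected at $\theta$ times the force of infection), and the vaccination rate equals $p$ times the force of infection. $F(\theta,p)$ is the endemic force of infection and $f(0)$ the basic reproduction number. *)

(* Defs.v *)
From HB Require Import structures.
From mathcomp Require Import all_boot all_order all_algebra.
From mathcomp Require Import all_classical all_reals all_analysis.
Set Implicit Arguments. Unset Strict Implicit. Unset Printing Implicit Defensive.
Import Order.TTheory GRing.Theory Num.Theory.
Local Open Scope classical_set_scope.
Local Open Scope ring_scope.

Definition Kint (R : realType) (mu : R) (A : R -> R) : \bar R :=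
  (\int[@lebesgue_measure R]_(tau in `[0%R, +oo[) (expR (- mu * tau) * A tau)%:E)%E.

Definition f0 (R : realType) (B mu : R) (A : R -> R) : R :=
  B / mu * fine (Kint mu A).

Definition endemic_rhs (R : realType) (B mu : R) (A : R -> R) (theta p x : R)
  : \bar R :=
  ((B / (1 + p - theta))%:E *
   \int[@lebesgue_measure R]_(a in `[0%R, +oo[)
     \int[@lebesgue_measure R]_(tau in `[0%R, +oo[)
        ((p * theta * expR (- (theta * a * x))
          + (1 + p) * (1 - theta) * expR (- ((1 + p) * a * x)))
         * expR (- mu * (a + tau)) * A tau)%:E)%E.

Definition is_endemic_FOI (R : realType) (B mu : R) (A : R -> R) (theta p x : R)
  : Prop :=
  0 < x /\ endemic_rhs B mu A theta p x = 1%E /\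
  (forall y : R, 0 < y -> endemic_rhs B mu A theta p y = 1%E -> y = x).

(* Main.v *)
Require Import Defs.
From HB Require Import structures.
From mathcomp Require Import all_boot all_order all_algebra.
From mathcomp Require Import all_classical all_reals all_analysis.
From mathcomp Require Import measurable_realfun exponential_distribution.
From mathcomp Require Import ring lra.
Import Order.TTheory GRing.Theory Num.Theory.
Import numFieldNormedType.Exports.
Local Open Scope classical_set_scope.
Local Open Scope ring_scope.
Set Implicit Arguments.
Section S.
Context (R : realType).
Notation leb := (@lebesgue_measure R).

Lemma mexpl (k : R) : measurable_fun [set: R] (fun a : R => expR (- k * a)).
Proof.
apply: measurableT_comp; first exact: measurable_expR.
exact: measurable_funM.
Qed.

Lemma expint (c : R) : 0 < c ->
  (\int[leb]_(a in `[0%R, +oo[) (expR (- c * a))%:E = (c^-1)%:E)%E.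
Proof.
move=> c0.
have := integral_exponential_pdf c0.
rewrite (_ : (fun x => (exponential_pdf c x)%:E) =
   ((fun x => (c * expR (- c * x))%:E) \_ `[0%R, +oo[)); last first.
  apply/funext => x; rewrite /exponential_pdf !patchE.
  by case: ifP.
rewrite -integral_mkcond.
under eq_integral do rewrite EFinM.
rewrite ge0_integralZl_EFin //; last 2 first.
- apply/measurable_EFinP; apply: measurable_funS (mexpl c) => //.
- exact: ltW.
move=> h.
have : ((c^-1)%:E * (c%:E * \int[leb]_(x in `[0%R, +oo[) (expR (- c * x))%:E) = (c^-1)%:E)%E.
  by rewrite h mule1.
rewrite muleA -EFinM mulVf ?gt_eqF // mul1e.
by [].
Qed.

Lemma rhsE (B mu : R) (A : R -> R) (theta p x : R) : 0 < mu ->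
  (forall t, 0 <= t -> 0 <= A t) ->
  measurable_fun (`[0%R, +oo[ : set R) A ->
  (Kint mu A < +oo)%E -> 0 <= p -> 0 <= theta <= 1 -> 0 <= x ->
  endemic_rhs B mu A theta p x =
  (B / (1 + p - theta) * fine (Kint mu A) *
   (p * theta / (theta * x + mu) + (1 + p) * (1 - theta) / ((1 + p) * x + mu)))%:E.
Proof.
move=> mu0 A0 mA Kfin p0 /andP[th0 th1] x0.
have mg : measurable_fun (`[0%R, +oo[ : set R)
    (fun t => (expR (- mu * t) * A t)%:E).
  apply/measurable_EFinP; apply: measurable_funM => //.
  exact: measurable_funS (mexpl mu).
have g0 : forall t, (`[0%R, +oo[%classic : set R) t -> (0 <= (expR (- mu * t) * A t)%:E)%E.
  move=> t; rewrite /= in_itv /= andbT => t0.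
  by rewrite lee_fin mulr_ge0 ?expR_ge0 ?A0.
have K0 : (0 <= Kint mu A)%E by apply: integral_ge0.
have KE : Kint mu A = (fine (Kint mu A))%:E.
  by rewrite fineK // ge0_fin_numE.
set K := fine (Kint mu A).
have K0' : 0 <= K by apply: fine_ge0.
rewrite /endemic_rhs.
set g := fun a => p * theta * expR (- (theta * a * x))
          + (1 + p) * (1 - theta) * expR (- ((1 + p) * a * x)).
have gE : forall a, g a * expR (- mu * a) =
   p * theta * expR (- (theta * x + mu) * a)
   + (1 + p) * (1 - theta) * expR (- ((1 + p) * x + mu) * a).
  move=> a; rewrite /g mulrDl -!mulrA -!expRD; congr (_ * (_ * expR _) + _ * (_ * expR _)); ring.
have g0' : forall a, 0 <= g a * expR (- mu * a).
  by move=> a; rewrite mulr_ge0 ?expR_ge0 // /g addr_ge0 // !mulr_ge0 ?expR_ge0 ?subr_ge0 ?addr_ge0.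
rewrite [X in (_ * X)%E](_ : _ = \int[@lebesgue_measure R]_(a in `[0%R, +oo[) (K * (g a * expR (- mu * a)))%:E)%E; last first.
  apply: eq_integral => a _.
  transitivity (\int[@lebesgue_measure R]_(t in `[0%R, +oo[) ((g a * expR (- mu * a))%:E * (expR (- mu * t) * A t)%:E))%E.
    apply: eq_integral => t _; rewrite -EFinM; congr EFin.
    by rewrite (mulrDr (- mu) a t) expRD -/(g a); ring.
  rewrite ge0_integralZl_EFin // -/(Kint mu A) KE -EFinM mulrC //.
rewrite [X in (_ * X)%E](_ : _ = (\int[@lebesgue_measure R]_(a in `[0%R, +oo[) (K%:E * ((p * theta * expR (- (theta * x + mu) * a))%:E
   + ((1 + p) * (1 - theta) * expR (- ((1 + p) * x + mu) * a))%:E)))%E); last first.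
  by apply: eq_integral => a _; rewrite gE EFinM EFinD.
have c1 : 0 < theta * x + mu by rewrite ltr_wpDl // mulr_ge0.
have c2 : 0 < (1 + p) * x + mu by rewrite ltr_wpDl // mulr_ge0 // addr_ge0.
rewrite ge0_integralZl_EFin //.
rewrite (ge0_integralD (@lebesgue_measure R)) //.
under eq_integral do rewrite EFinM.
under [X in (_ + X)%E]eq_integral do rewrite EFinM.
rewrite !(ge0_integralZl_EFin (@lebesgue_measure R)) //.
rewrite !expint //.
by rewrite -!EFinM mulrA.
all: try (by rewrite mulr_ge0 // ?subr_ge0 // addr_ge0).
all: try (by move=> a _; rewrite lee_fin mulr_ge0 ?expR_ge0 // ?mulr_ge0 // ?subr_ge0 // ?addr_ge0).
all: try (by move=> a _; rewrite adde_ge0 // lee_fin mulr_ge0 ?expR_ge0 // ?mulr_ge0 // ?subr_ge0 // ?addr_ge0).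
all: try (by apply/measurable_EFinP; apply: measurable_funS (mexpl _)).
all: try (by apply/measurable_EFinP; apply: measurable_funM => //; apply: measurable_funS (mexpl _)).
by apply: emeasurable_funD; apply/measurable_EFinP; apply: measurable_funM => //; apply: measurable_funS (mexpl _).
Qed.
End S.
Section T.
Context (R : realType).

Definition hh (c mu theta p y : R) :=
  c * (1 + p - theta)^-1 *
  (p * theta / (theta * y + mu) + (1 + p) * (1 - theta) / ((1 + p) * y + mu)).

Lemma hh_mono c mu theta p y z : 0 < c -> 0 < mu -> 0 < theta <= 1 -> 0 < p ->
  0 < y -> y <= z -> hh c mu theta p z <= hh c mu theta p y.
Proof.
move=> c0 mu0 /andP[t0 t1] p0 y0 yz.
rewrite /hh; apply: ler_wpM2l; first by apply: mulr_ge0; [exact: ltW | rewrite invr_ge0; lra].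
apply: lerD; apply: ler_wpM2l.
- by rewrite mulr_ge0 // ltW.
- rewrite lef_pV2 ?posrE; [|nra|nra]. nra.
- by rewrite mulr_ge0 // ?subr_ge0 // addr_ge0 // ltW.
- rewrite lef_pV2 ?posrE; [|nra|nra]. nra.
Qed.

Lemma hh_up c mu theta p y : 0 < c -> 0 < mu -> 0 < theta <= 1 -> 0 < p ->
  0 < y -> hh c mu theta p y <=
   c * theta / (theta * y + mu) + c * (1 - theta) / y * (1 + p - theta)^-1.
Proof.
move=> c0 mu0 /andP[t0 t1] p0 y0.
set u := (1 + p - theta)^-1.
have u0 : 0 < u by rewrite invr_gt0; lra.
have uE : u * (1 + p - theta) = 1 by rewrite mulVf //; apply/eqP; lra.
set v := (theta * y + mu)^-1.
have v0 : 0 < v by rewrite invr_gt0; nra.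
set w := ((1 + p) * y + mu)^-1.
have w0 : 0 < w by rewrite invr_gt0; nra.
have wE : w * ((1 + p) * y + mu) = 1 by rewrite mulVf //; apply/eqP; nra.
set yi := y^-1.
have yE : yi * y = 1 by rewrite mulVf //; apply/eqP; nra.
have yi0 : 0 < yi by rewrite invr_gt0.
have up : u * p <= 1 by nra.
have wp : (1 + p) * w <= yi.
  have : (1 + p) * w * y <= 1 by nra.
  move=> h; nra.
rewrite /hh -/u -/v -/w -/yi.
have h1 : c * u * (p * theta * v) <= c * theta * v.
  have : 0 <= c * theta * v * (1 - u * p) by rewrite !mulr_ge0 ?subr_ge0 // ltW.
  nra.
have h2 : c * u * ((1 + p) * (1 - theta) * w) <= c * (1 - theta) * yi * u.
  have : 0 <= c * (1 - theta) * u * (yi - (1 + p) * w) by rewrite !mulr_ge0 ?subr_ge0 // ltW.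
  nra.
nra.
Qed.

Lemma hh_low c mu theta p y : 0 < c -> 0 < mu -> 0 < theta <= 1 -> 0 < p ->
  0 < y -> c * theta / (theta * y + mu) * (1 - (1 - theta) * (1 + p - theta)^-1)
    <= hh c mu theta p y.
Proof.
move=> c0 mu0 /andP[t0 t1] p0 y0.
set u := (1 + p - theta)^-1.
have u0 : 0 < u by rewrite invr_gt0; lra.
have uE : u * (1 + p - theta) = 1 by rewrite mulVf //; apply/eqP; lra.
set v := (theta * y + mu)^-1.
have v0 : 0 < v by rewrite invr_gt0; nra.
set w := ((1 + p) * y + mu)^-1.
have w0 : 0 < w by rewrite invr_gt0; nra.
rewrite /hh -/u -/v -/w.
have : 0 <= c * u * ((1 + p) * (1 - theta) * w) by rewrite !mulr_ge0 ?subr_ge0 // ?addr_ge0 // ltW.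
have e : 1 - (1 - theta) * u = p * u by nra.
rewrite e. nra.
Qed.

Lemma r0 (theta : R) : theta <= 1 -> (fun p : R => (1 + p - theta)^-1) @ +oo --> 0.
Proof.
move=> t1.
have -> : (fun p : R => (1 + p - theta)^-1) = (fun p => (p + (1 - theta))^-1).
  by apply/funext => p /=; congr (_^-1); ring.
apply/(@gtr0_cvgV0 _ _ _ _ (fun p => p + (1 - theta))); last exact: cvg_addrr.
near=> p; suff : 0 < p by lra.
by near: p; apply: nbhs_pinfty_gt; rewrite num_real.
Unshelve. all: by end_near.
Qed.
End T.
Arguments hh {R}.

Unset Implicit Arguments.
Theorem mainTheorem3 (R : realType) (B mu : R) (A : R -> R)
  (F : R -> R -> R) :
  0 < B -> 0 < mu ->
  (forall t, 0 <= t -> 0 <= A t) ->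
  measurable_fun (`[0%R, +oo[ : set R) A ->
  (Kint mu A < +oo)%E ->
  1 < f0 B mu A ->
  (forall theta p, 0 < theta <= 1 -> 0 < p ->
     is_endemic_FOI B mu A theta p (F theta p)) ->
  forall theta, 0 < theta <= 1 ->
    F theta p @[p --> +oo] -->
      (if theta <= 1 / f0 B mu A then 0
       else mu * (f0 B mu A - 1 / theta)).
Proof.
move=> B0 mu0 A0 mA Kfin f1 HF theta thP.
have /andP[th0 th1] := thP.
set f := f0 B mu A.
have f0' : 0 < f by apply: lt_trans f1.
have Kpos : 0 < fine (Kint mu A).
  by move: f0'; rewrite /f /f0 pmulr_rgt0 // divr_gt0.
set K := fine (Kint mu A).
set c := B * K.
have c0 : 0 < c by rewrite mulr_gt0.
have cf : c = f * mu.
  rewrite /c /f /f0 -/K; field; rewrite gt_eqF //.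
have Hx : forall p, 0 < p -> 0 < F theta p /\ hh c mu theta p (F theta p) = 1.
  move=> p p0; have [x0 [e _]] := HF theta p thP p0.
  split => //.
  move: e; rewrite rhsE //; last 3 first.
  - exact: ltW.
  - by apply/andP; split => //; exact: ltW.
  - exact: ltW.
  move=> /(congr1 fine) /= e.
  by rewrite -e /hh /c -/K; ring.
set phi := fun y => c * theta / (theta * y + mu).
have ClaimA : forall y, 0 < y -> phi y < 1 -> \forall p \near +oo, F theta p < y.
  move=> y y0 hy.
  have cv : (fun p => phi y + c * (1 - theta) / y * (1 + p - theta)^-1) @ +oo --> phi y.
    have := cvgD (cvg_cst (phi y)) (cvgM (cvg_cst (c * (1 - theta) / y)) (r0 theta th1)).
    move=> h; rewrite mulr0 addr0 in h; exact: h.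
  have H := cvgr_lt _ cv _ hy.
  near=> p.
  have p0 : 0 < p by near: p; apply: nbhs_pinfty_gt; rewrite num_real.
  have [x0 hx] := Hx p p0.
  rewrite ltNge; apply/negP => yx.
  have h1 := hh_mono _ _ _ _ _ _ _ c0 mu0 thP p0 y0 yx.
  have h2 := hh_up _ _ _ _ _ _ c0 mu0 thP p0 y0.
  have h3 : phi y + c * (1 - theta) / y * (1 + p - theta)^-1 < 1 by near: p; apply: H.
  rewrite /phi in h3; lra.
have ClaimB : forall y, 0 < y -> 1 < phi y -> \forall p \near +oo, y < F theta p.
  move=> y y0 hy.
  have cv : (fun p => phi y * (1 - (1 - theta) * (1 + p - theta)^-1)) @ +oo --> phi y.
    have := cvgM (cvg_cst (phi y)) (cvgB (cvg_cst (1 : R)) (cvgM (cvg_cst (1 - theta)) (r0 theta th1))).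
    by move=> h; rewrite mulr0 subr0 mulr1 in h; exact: h.
  have H := cvgr_gt _ cv _ hy.
  near=> p.
  have p0 : 0 < p by near: p; apply: nbhs_pinfty_gt; rewrite num_real.
  have [x0 hx] := Hx p p0.
  rewrite ltNge; apply/negP => xy.
  have h1 := hh_mono _ _ _ _ _ _ _ c0 mu0 thP p0 x0 xy.
  have h2 := hh_low _ _ _ _ _ _ c0 mu0 thP p0 y0.
  have h3 : 1 < phi y * (1 - (1 - theta) * (1 + p - theta)^-1) by near: p; apply: H.
  rewrite /phi in h3; lra.
have Fpos : \forall p \near +oo, 0 < F theta p.
  near=> p.
  have p0 : 0 < p by near: p; apply: nbhs_pinfty_gt; rewrite num_real.
  by have [] := Hx p p0.
apply/cvgrPdist_lt => e e0.
case: ifPn => hth.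
- have tf : theta * f <= 1 by rewrite -ler_pdivlMr.
  have pe : phi e < 1.
    rewrite /phi ltr_pdivrMr; last nra.
    rewrite cf; nra.
  have HA := ClaimA e e0 pe.
  near=> p.
  have x0 : 0 < F theta p by near: p; exact: Fpos.
  have xe : F theta p < e by near: p; exact: HA.
  rewrite sub0r normrN gtr0_norm //.
- have tf : 1 < theta * f by rewrite -ltr_pdivrMr // ltNge.
  set L := mu * (f - 1 / theta).
  have LE : theta * L = mu * (f * theta) - mu.
    rewrite /L; field; rewrite gt_eqF //.
  have L0 : 0 < L by nra.
  have HU : \forall p \near +oo, F theta p < L + e.
    apply: ClaimA; first by lra.
    rewrite /phi ltr_pdivrMr; last nra.
    rewrite cf; nra.
  have HL : \forall p \near +oo, L - e < F theta p.
    case: (ltP e L) => eL.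
      apply: ClaimB; first by lra.
      rewrite /phi ltr_pdivlMr; last nra.
      rewrite cf; nra.
    near=> p.
    have x0 : 0 < F theta p by near: p; exact: Fpos.
    lra.
  near=> p.
  have h1 : F theta p < L + e by near: p; exact: HU.
  have h2 : L - e < F theta p by near: p; exact: HL.
  rewrite ltr_norml; apply/andP; split; lra.
Unshelve. all: by end_near.
Qed.
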